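(* Let $n\ge 4$, let $s_i=(i,i+1)\in S_n$, and let $\pi:S_n\to\mathrm{O}(V)$ be a real representation. Put $h_\pi=\frac{\chi_\pi(1)-\chi_\pi(s_1s_3)}{2}$. Let $1\le i,k\le n-1$ with $|i-k|>1$, and let $c_i,c_k\in\mathrm{Pin}(V)$ satisfy $\rho(c_i)=\pi(s_i)$, $\rho(c_k)=\pi(s_k)$ and $c_i^2=c_k^2=1$. Then $c_ic_k=c_kc_i$ if and only if $h_\pi$ is a multiple of $4$.
   Context: $V$ is a Euclidean space and $\chi_\pi$ the character of $\pi$. $\mathrm{Pin}(V)$ is the Pin group of $V$ defined inside the Clifford algebra $C(V)$ (tensor algebra modulo the ideal generated by $v\otimes v+|v|^2$), and $\rho:\mathrm{Pin}(V)\to\mathrm{O}(V)$ is the standard double cover with kernel $\{\pm1\}$, sending a unit vector $v$ to the reflection in $v^\perp$. *)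

(* Defs.v *)
From HB Require Import structures.
From mathcomp Require Import all_boot all_order all_algebra all_fingroup.
From mathcomp Require Import reals.
Set Implicit Arguments. Unset Strict Implicit. Unset Printing Implicit Defensive.
Import Order.TTheory GRing.Theory Num.Theory.
Local Open Scope ring_scope.

(* The Euclidean space V is modelled as 'rV[R]_d with the standard inner
   product; a matrix M : 'M_d is identified with the linear map v |-> v *m M. *)
Definition sqnorm (R : realType) (d : nat) (v : 'rV[R]_d) : R := (v *m v^T) 0 0.

(* Adjacent transposition s_i = (i, i+1) in S_n, with 1-based indices
   (i.e. it swaps the 0-based points i-1 and i of 'I_n).  Only meaningful
   for 1 <= i <= n-1, where both points exist. *)
Definition adjtr (n i : nat) : 'S_n :=
  match @insub _ (fun x => x < n)%N (ordinal n) i.-1, @insub _ (fun x => x < n)%N (ordinal n) i with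
  | Some a, Some b => tperm a b
  | _, _ => 1%g
  end.

Definition character (R : realType) (n d : nat) (pi : 'S_n -> 'M[R]_d) (g : 'S_n) : R :=
  \tr (pi g).

Definition h_pi (R : realType) (n d : nat) (pi : 'S_n -> 'M[R]_d) : R :=
  (character pi 1%g - character pi (adjtr n 1 * adjtr n 3)%g) / 2.

(* (A, iota) is the Clifford algebra C(V) of V = 'rV[R]_d, i.e. the quotient
   of the tensor algebra by the ideal generated by v (x) v + |v|^2, given by
   its universal property: iota v ^+ 2 = - |v|^2, and every linear map f into
   an R-algebra with f v ^+ 2 = - |v|^2 factors uniquely through an algebra
   morphism A -> B. *)
Definition is_clifford (R : realType) (d : nat) (A : algType R)
    (iota : {linear 'rV[R]_d -> A}) : Prop :=
  (forall v, iota v * iota v = - (sqnorm v)%:A) /\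
  (forall (B : algType R) (f : {linear 'rV[R]_d -> B}),
     (forall v, f v * f v = - (sqnorm v)%:A) ->
     exists g : {lrmorphism A -> B},
       (forall v, g (iota v) = f v) /\
       (forall h : {lrmorphism A -> B}, (forall v, h (iota v) = f v) ->
          forall a, h a = g a)).

(* Pin(V): the subgroup of the units of C(V) generated by the unit vectors,
   i.e. the set of finite products of unit vectors (unit vectors are units,
   with inverse -u, so the generated monoid is already the group). *)
Definition in_pin (R : realType) (d : nat) (A : algType R)
    (iota : {linear 'rV[R]_d -> A}) (c : A) : Prop :=
  exists us : seq 'rV[R]_d,
    (forall u, u \in us -> sqnorm u = 1) /\ c = \prod_(u <- us) iota u.

(* rho(c) = M for the twisted adjoint double cover rho : Pin(V) -> O(V),
   rho(c)(v) = alpha(c) v c^-1, where alpha is the grade automorphism of C(V)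
   (v |-> -v).  Stated without inverse: alpha(c) v = rho(c)(v) c.
   For a unit vector u this gives rho(u)(v) = u v u = v - 2<u,v>u, the
   reflection in u^perp. *)
Definition rho_is (R : realType) (d : nat) (A : algType R)
    (iota : {linear 'rV[R]_d -> A}) (alpha : {lrmorphism A -> A})
    (c : A) (M : 'M[R]_d) : Prop :=
  forall v, alpha c * iota v = iota (v *m M) * c.

(* Main.v *)
Require Import Defs.
From HB Require Import structures.
From mathcomp Require Import all_boot all_order all_algebra all_fingroup.
From mathcomp Require Import reals zify.
From mathcomp.algebra_tactics Require Import ring lra.
Import Order.TTheory GRing.Theory Num.Theory.
Local Open Scope ring_scope.
Set Implicit Arguments. Unset Strict Implicit. Unset Printing Implicit Defensive.

Definition dotv (R : realType) (d : nat) (u w : 'rV[R]_d) : R := (u *m w^T) 0 0.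

Lemma dotvC (R : realType) (d : nat) (u w : 'rV[R]_d) : dotv u w = dotv w u.
Proof. by rewrite /dotv (_ : w *m u^T = (u *m w^T)^T) ?mxE // trmx_mul trmxK. Qed.

Lemma dotvDr (R : realType) (d : nat) (u w1 w2 : 'rV[R]_d) :
  dotv u (w1 + w2) = dotv u w1 + dotv u w2.
Proof. by rewrite /dotv linearD /= mulmxDr [LHS]mxE. Qed.

Lemma dotvDl (R : realType) (d : nat) (u w1 w2 : 'rV[R]_d) :
  dotv (w1 + w2) u = dotv w1 u + dotv w2 u.
Proof. by rewrite dotvC dotvDr !(dotvC u). Qed.

Lemma sqnormD (R : realType) (d : nat) (u w : 'rV[R]_d) :
  sqnorm (u + w) = sqnorm u + sqnorm w + 2 * dotv u w.
Proof.
rewrite -[sqnorm _]/(dotv _ _) -[sqnorm u]/(dotv _ _) -[sqnorm w]/(dotv _ _).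
rewrite dotvDl !dotvDr (dotvC w u); ring.
Qed.

Lemma zmod_aux (V : zmodType) (a b c x y : V) :
  a + x + (y + b) = a + b + c -> x + y = c.
Proof. by move=> H; apply: (@addrI _ (a + b)); rewrite -H addrACA [y + b]addrC. Qed.

Lemma anticomm (R : realType) (d : nat) (A : algType R)
  (iota : {linear 'rV[R]_d -> A})
  (hsq : forall v, iota v * iota v = - (sqnorm v)%:A) (u w : 'rV[R]_d) :
  iota u * iota w + iota w * iota u = - (2 * dotv u w)%:A.
Proof.
have := hsq (u + w); rewrite linearD /= mulrDl !mulrDr !hsq sqnormD.
by rewrite !scalerDl !opprD; apply: zmod_aux.
Qed.

Lemma orth_anti (R : realType) (d : nat) (A : algType R)
  (iota : {linear 'rV[R]_d -> A})
  (hsq : forall v, iota v * iota v = - (sqnorm v)%:A) (u w : 'rV[R]_d) :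
  dotv u w = 0 -> iota u * iota w = - (iota w * iota u).
Proof.
move=> h; have := anticomm hsq u w; rewrite h mulr0 scale0r oppr0.
by move/eqP; rewrite addr_eq0 => /eqP.
Qed.

Definition Ru (R : realType) (d : nat) (u : 'rV[R]_d) : 'M[R]_d :=
  1%:M - 2 *: (u^T *m u).

Lemma mul_trv (R : realType) (d : nat) (v u : 'rV[R]_d) :
  v *m u^T *m u = dotv v u *: u.
Proof. by rewrite {1}(mx11_scalar (v *m u^T)) mul_scalar_mx. Qed.

Lemma refl_eq (R : realType) (d : nat) (A : algType R)
  (iota : {linear 'rV[R]_d -> A})
  (hsq : forall v, iota v * iota v = - (sqnorm v)%:A) (u v : 'rV[R]_d) :
  sqnorm u = 1 -> - iota u * iota v = iota (v *m Ru u) * iota u.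
Proof.
move=> hu; rewrite /Ru mulmxBr mulmx1 -scalemxAr mulmxA mul_trv scalerA.
rewrite linearB linearZ /= mulrBl -scalerAl hsq hu.
have := anticomm hsq u v; rewrite (dotvC u v) => h.
have -> : - iota u * iota v = iota v * iota u + (2 * dotv v u)%:A.
  by rewrite mulNr -[iota u * iota v](addrK (iota v * iota u)) h opprB opprK.
by rewrite scalerN scalerA mulr1 opprK.
Qed.

Definition X (R : realType) (d : nat) (A : algType R)
  (iota : {linear 'rV[R]_d -> A}) (ws : seq 'rV[R]_d) : A :=
  \prod_(w <- ws) iota w.

Definition reflM (R : realType) (d : nat) (ws : seq 'rV[R]_d) : 'M[R]_d :=
  foldr (fun u M => M *m Ru u) 1%:M ws.

Lemma alphaX_refl (R : realType) (d : nat) (A : algType R)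
  (iota : {linear 'rV[R]_d -> A})
  (hsq : forall v, iota v * iota v = - (sqnorm v)%:A)
  (alpha : {lrmorphism A -> A}) (halpha : forall v, alpha (iota v) = - iota v)
  (ws : seq 'rV[R]_d) : (forall u, u \in ws -> sqnorm u = 1) ->
  forall v, alpha (X iota ws) * iota v = iota (v *m reflM ws) * X iota ws.
Proof.
elim: ws => [|u ws IH] hws v.
  by rewrite /X /reflM /= big_nil rmorph1 mul1r mulr1 mulmx1.
rewrite /X big_cons rmorphM /= halpha -mulrA -/(X iota ws) IH; last first.
  by move=> w hw; apply: hws; rewrite inE hw orbT.
rewrite mulrA refl_eq //; last by apply: hws; rewrite inE eqxx.
by rewrite /reflM /= -mulmxA mulrA.
Qed.

Lemma alphaX (R : realType) (d : nat) (A : algType R)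
  (iota : {linear 'rV[R]_d -> A})
  (alpha : {lrmorphism A -> A}) (halpha : forall v, alpha (iota v) = - iota v)
  (ws : seq 'rV[R]_d) : alpha (X iota ws) = (-1) ^+ size ws *: X iota ws.
Proof.
elim: ws => [|u ws IH]; first by rewrite /X big_nil rmorph1 expr0 scale1r.
rewrite /X big_cons rmorphM /= halpha -/(X iota ws) IH exprS -scalerA.
by rewrite scalerAr scaleN1r mulNr.
Qed.

Definition Xi (R : realType) (d : nat) (A : algType R)
  (iota : {linear 'rV[R]_d -> A}) (ws : seq 'rV[R]_d) : A :=
  \prod_(w <- rev ws) (- iota w).

Lemma XiE (R : realType) (d : nat) (A : algType R)
  (iota : {linear 'rV[R]_d -> A}) (ws : seq 'rV[R]_d) :
  Xi iota ws = X iota (map (fun w => - w) (rev ws)).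
Proof. by rewrite /X /Xi big_map; apply: eq_bigr => w _; rewrite linearN. Qed.

Lemma XXi (R : realType) (d : nat) (A : algType R)
  (iota : {linear 'rV[R]_d -> A})
  (hsq : forall v, iota v * iota v = - (sqnorm v)%:A)
  (ws : seq 'rV[R]_d) : (forall u, u \in ws -> sqnorm u = 1) ->
  X iota ws * Xi iota ws = 1 /\ Xi iota ws * X iota ws = 1.
Proof.
elim: ws => [|u ws IH] hws.
  by rewrite /X /Xi /= !big_nil mulr1.
have [h1 h2] : X iota ws * Xi iota ws = 1 /\ Xi iota ws * X iota ws = 1.
  by apply: IH => w hw; apply: hws; rewrite inE hw orbT.
have hu : iota u * iota u = -1 by rewrite hsq hws ?inE ?eqxx // scale1r.
rewrite /X /Xi rev_cons big_rcons big_cons -/(X iota ws) -/(Xi iota ws); split.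
  by rewrite -mulrA (mulrA (X iota ws)) h1 mul1r mulrN hu opprK.
by rewrite -mulrA (mulrA (- iota u)) mulNr hu opprK mul1r h2.
Qed.

Lemma comm_X (R : realType) (d : nat) (A : algType R)
  (iota : {linear 'rV[R]_d -> A}) (y : A) (s : R) (ws : seq 'rV[R]_d) :
  (forall w, w \in ws -> y * iota w = s *: (iota w * y)) ->
  y * X iota ws = s ^+ size ws *: (X iota ws * y).
Proof.
elim: ws => [|u ws IH] hws.
  by rewrite /X big_nil mulr1 mul1r expr0 scale1r.
rewrite /X big_cons -/(X iota ws) mulrA hws ?inE ?eqxx //.
rewrite -scalerAl -(mulrA (iota u) y) IH; last by move=> w hw; apply: hws; rewrite inE hw orbT.
rewrite scalerAr scalerA -exprS.
by rewrite -scalerAr mulrA.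
Qed.

Lemma self_opp0 (R : realType) (A : lmodType R) (x : A) : x = - x -> x = 0.
Proof.
move=> h; have h2 : (2%:R : R) *: x = 0 by rewrite scaler_nat mulr2n {2}h subrr.
by rewrite -(scalerK (_ : (2%:R : R) != 0) x) ?h2 ?scaler0 // pnatr_eq0.
Qed.

Lemma even_twist (R : realType) (d : nat) (A : algType R)
  (iota : {linear 'rV[R]_d -> A})
  (alpha : {lrmorphism A -> A}) (halpha : forall v, alpha (iota v) = - iota v)
  (zs : seq 'rV[R]_d) (y' : A) :
  (forall v, alpha (X iota zs) * iota v = iota v * X iota zs) ->
  X iota zs * y' = 1 ->
  forall v, X iota zs * iota v = iota v * X iota zs.
Proof.
move=> htw hinv; have ha := alphaX halpha zs.
case hodd: (odd (size zs)); last first.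
  move=> v; rewrite -htw ha -signr_odd hodd expr0 scale1r //.
have hanti : forall w, w \in zs -> X iota zs * iota w = (-1) *: (iota w * X iota zs).
  move=> w _; rewrite -htw ha -signr_odd hodd expr1 scaleN1r scaleN1r mulNr opprK //.
have := comm_X hanti; rewrite -signr_odd hodd expr1 scaleN1r => /self_opp0 h0.
have : (1 : A) = 0.
  by rewrite -hinv -{1}(mulr1 (X iota zs)) -hinv !mulrA h0 !mul0r.
by move/eqP; rewrite oner_eq0.
Qed.

Lemma sign_sq (R : realType) (A : lmodType R) (k : nat) (x y : A) :
  x = (-1) ^+ k *: y -> y = (-1) ^+ k *: x.
Proof. by move=> ->; rewrite scalerA -exprMn mulrNN mulr1 expr1n scale1r. Qed.

Lemma sign_X (R : realType) (d : nat) (A : algType R)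
  (iota : {linear 'rV[R]_d -> A})
  (hsq : forall v, iota v * iota v = - (sqnorm v)%:A) (L1 L2 : seq 'rV[R]_d) :
  (forall u w, u \in L1 -> w \in L2 -> dotv u w = 0) ->
  X iota L1 * X iota L2 = (-1) ^+ (size L1 * size L2) *: (X iota L2 * X iota L1).
Proof.
move=> horth; rewrite exprM; apply: comm_X => w hw.
apply: sign_sq; apply: (@comm_X _ _ _ iota (iota w) (-1) L1) => u hu.
by rewrite (orth_anti hsq (_ : dotv w u = 0)) ?scaleN1r // dotvC; apply: horth.
Qed.

Lemma sign_c0e0 (R : realType) (d : nat) (A : algType R)
  (iota : {linear 'rV[R]_d -> A})
  (hsq : forall v, iota v * iota v = - (sqnorm v)%:A) (as_ bs bs' : seq 'rV[R]_d) :
  (forall u w, u \in bs -> w \in as_ -> dotv u w = 0) ->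
  (forall u w, u \in bs -> w \in bs' -> dotv u w = 0) ->
  (forall u w, u \in bs' -> w \in as_ -> dotv u w = 0) ->
  X iota (as_ ++ bs) * X iota (as_ ++ bs') =
  (-1) ^+ (size bs * size as_ + size bs * size bs' + size bs' * size as_) *:
    (X iota (as_ ++ bs') * X iota (as_ ++ bs)).
Proof.
move=> h1 h2 h3; rewrite /X !big_cat /= -!/(X iota _).
set a := X iota as_; set b := X iota bs; set b' := X iota bs'.
have e1 := sign_X hsq h1; have e2 := sign_X hsq h2; have e3 := sign_X hsq h3.
rewrite -/a -/b -/b' in e1 e2 e3.
rewrite -mulrA (mulrA b) e1 -scalerAl -scalerAr -!mulrA e2 -!scalerAr scalerA.
rewrite (mulrA b' a) e3 -scalerAl -scalerAr -(mulrA a b' b) scalerA.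
congr (_ *: _); rewrite !exprD -mulrA -exprMn mulrNN mulr1 expr1n mulr1 //.

Qed.

Lemma twist_factor (R : realType) (d : nat) (A : algType R)
  (iota : {linear 'rV[R]_d -> A})
  (hsq : forall v, iota v * iota v = - (sqnorm v)%:A)
  (alpha : {lrmorphism A -> A}) (halpha : forall v, alpha (iota v) = - iota v)
  (us cs : seq 'rV[R]_d) (P : 'M[R]_d) :
  (forall u, u \in us -> sqnorm u = 1) ->
  (forall u, u \in cs -> sqnorm u = 1) ->
  P *m P = 1%:M -> reflM cs = P ->
  (forall v, alpha (X iota us) * iota v = iota (v *m P) * X iota us) ->
  exists zs, X iota zs * X iota cs = X iota us /\
    forall v, X iota zs * iota v = iota v * X iota zs.
Proof.
move=> hus hcs hPP hP hr.
have [hu1 hu2] := XXi hsq hus; have [hc1 hc2] := XXi hsq hcs.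
have hy : X iota us * Xi iota cs = X iota (us ++ map (fun w => - w) (rev cs)).
  by rewrite XiE /X big_cat.
exists (us ++ map (fun w => - w) (rev cs)); split.
  by rewrite -hy -mulrA hc2 mulr1.
have hac : forall w, alpha (X iota cs) * iota w = iota (w *m P) * X iota cs.
  by move=> w; rewrite (alphaX_refl hsq halpha hcs) hP.
have hai : forall v, alpha (Xi iota cs) * iota v = iota (v *m P) * Xi iota cs.
  move=> v.
  have -> : iota v = alpha (X iota cs) * iota (v *m P) * Xi iota cs.
    by rewrite hac -mulmxA hPP mulmx1 -mulrA hc1 mulr1.
  by rewrite !mulrA -rmorphM hc2 rmorph1 mul1r.
apply: (even_twist halpha (y' := X iota cs * Xi iota us)).
- move=> v; rewrite -hy rmorphM -mulrA hai mulrA hr -mulmxA hPP mulmx1 mulrA.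
  by [].
- by rewrite -hy -mulrA (mulrA (Xi iota cs)) hc2 mul1r hu1.
Qed.

Lemma commX1 (R : realType) (d : nat) (A : algType R)
  (iota : {linear 'rV[R]_d -> A}) (y : A) (L : seq 'rV[R]_d) :
  (forall v, y * iota v = iota v * y) -> y * X iota L = X iota L * y.
Proof.
move=> h; rewrite (@comm_X _ _ _ iota y 1 L) ?expr1n ?scale1r // => w _.
by rewrite scale1r h.
Qed.

Lemma cliff_main (R : realType) (d : nat) (A : algType R)
  (iota : {linear 'rV[R]_d -> A})
  (hsq : forall v, iota v * iota v = - (sqnorm v)%:A)
  (alpha : {lrmorphism A -> A}) (halpha : forall v, alpha (iota v) = - iota v)
  (us ws as_ bs bs' : seq 'rV[R]_d) (P Q : 'M[R]_d) :
  (forall u, u \in us -> sqnorm u = 1) ->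
  (forall u, u \in ws -> sqnorm u = 1) ->
  (forall u, u \in as_ ++ bs -> sqnorm u = 1) ->
  (forall u, u \in as_ ++ bs' -> sqnorm u = 1) ->
  P *m P = 1%:M -> Q *m Q = 1%:M ->
  reflM (as_ ++ bs) = P -> reflM (as_ ++ bs') = Q ->
  (forall v, alpha (X iota us) * iota v = iota (v *m P) * X iota us) ->
  (forall v, alpha (X iota ws) * iota v = iota (v *m Q) * X iota ws) ->
  (forall u w, u \in bs -> w \in as_ -> dotv u w = 0) ->
  (forall u w, u \in bs -> w \in bs' -> dotv u w = 0) ->
  (forall u w, u \in bs' -> w \in as_ -> dotv u w = 0) ->
  X iota us * X iota ws =
  (-1) ^+ (size bs * size as_ + size bs * size bs' + size bs' * size as_) *:
    (X iota ws * X iota us).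
Proof.
move=> hus hws hc he hPP hQQ hP hQ hrc hre h1 h2 h3.
have [zs1 [e1 c1]] := twist_factor hsq halpha hus hc hPP hP hrc.
have [zs2 [e2 c2]] := twist_factor hsq halpha hws he hQQ hQ hre.
rewrite -e1 -e2.
set Y := X iota zs1; set Z := X iota zs2.
set C := X iota (as_ ++ bs); set E := X iota (as_ ++ bs').
have YZ : Y * Z = Z * Y by apply: commX1.
have ZC : Z * C = C * Z by apply: commX1.
have YE : Y * E = E * Y by apply: commX1.
rewrite -mulrA (mulrA C) -ZC -mulrA (mulrA Y) (sign_c0e0 hsq h1 h2 h3) -/C -/E.
rewrite -!scalerAr; congr (_ *: _).
by rewrite -mulrA (mulrA E) -YE -!mulrA (mulrA Z) -YZ -!mulrA.
Qed.

Lemma tr11 (R : realType) (M : 'M[R]_1) : \tr M = M 0 0.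
Proof. by rewrite /mxtrace big_ord1. Qed.

Lemma orth_mx (R : realType) (d : nat) (u w : 'rV[R]_d) :
  dotv u w = 0 -> u *m w^T = 0.
Proof.
move=> h; rewrite (mx11_scalar (u *m w^T)); move: h; rewrite /dotv => ->.
by apply/matrixP => i j; rewrite !mxE mul0rn.
Qed.

Lemma unit_mx (R : realType) (d : nat) (u : 'rV[R]_d) :
  sqnorm u = 1 -> u *m u^T = 1%:M.
Proof. by move=> h; rewrite (mx11_scalar (u *m u^T)); move: h; rewrite /sqnorm => ->. Qed.

Lemma tr_sq_ge0 (R : realType) (m n : nat) (M : 'M[R]_(m, n)) :
  0 <= \tr (M *m M^T).
Proof.
rewrite /mxtrace; apply: sumr_ge0 => i _; rewrite mxE; apply: sumr_ge0 => j _.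
by rewrite mxE -expr2 sqr_ge0.
Qed.

Lemma sqnorm_eq0 (R : realType) (d : nat) (w : 'rV[R]_d) :
  sqnorm w = 0 -> w = 0.
Proof.
rewrite /sqnorm mxE => h; apply/rowP => j; rewrite mxE.
have hge : forall k : 'I_d, true -> 0 <= w 0 k * w^T k 0.
  by move=> k _; rewrite mxE -expr2 sqr_ge0.
have := psumr_eq0P hge h (i := j) isT; rewrite mxE -expr2 => /eqP.
by rewrite sqrf_eq0 => /eqP ->.
Qed.

Lemma sqnorm_ge0 (R : realType) (d : nat) (w : 'rV[R]_d) : 0 <= sqnorm w.
Proof. by rewrite /sqnorm -tr11 tr_sq_ge0. Qed.

Lemma sqnormZ (R : realType) (d : nat) (k : R) (w : 'rV[R]_d) :
  sqnorm (k *: w) = k ^+ 2 * sqnorm w.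
Proof. by rewrite /sqnorm linearZ /= -scalemxAl -scalemxAr scalerA [LHS]mxE expr2. Qed.

Lemma onb_aux (R : realType) (d N : nat) : forall E : 'M[R]_d,
  E^T = E -> E *m E = E -> \tr E < N%:R ->
  exists us : seq 'rV[R]_d,
    (forall u, u \in us -> sqnorm u = 1 /\ u *m E = u) /\
    pairwise (fun u w => dotv u w == 0) us /\
    \sum_(u <- us) u^T *m u = E.
Proof.
elim: N => [|N IH] E hs hi htr.
  have : \tr E = \tr (E *m E^T) by rewrite hs hi.
  by move=> h; move: htr; rewrite h ltNge tr_sq_ge0.
case: (eqVneq E 0) => [-> | hE].
  by exists [::]; split => //; rewrite big_nil.
have [i hi0] : exists i, row i E != 0.
  apply/existsP; rewrite -negb_forall; apply: contra hE => /forallP h.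
  apply/eqP/matrixP => k j; have := h k; move/eqP/rowP/(_ j); rewrite !mxE.
  by [].
set w := row i E.
have hw : w *m E = w by rewrite -row_mul hi.
have hwpos : 0 < sqnorm w.
  rewrite lt_def sqnorm_ge0 andbT; apply: contra hi0 => /eqP h.
  by apply/eqP; apply: sqnorm_eq0.
set s := Num.sqrt (sqnorm w).
have hs0 : 0 < s by rewrite sqrtr_gt0.
set u := s^-1 *: w.
have hu1 : sqnorm u = 1.
  rewrite sqnormZ exprVn sqr_sqrtr ?mulVf //; first by rewrite gt_eqF.
  by rewrite le_eqVlt hwpos orbT.
have hu : u *m E = u by rewrite -scalemxAl hw.
have hEu : E *m u^T = u^T by rewrite -{1}hs -trmx_mul hu.
have uu := unit_mx hu1.
set U := u^T *m u.
have EU : E *m U = U by rewrite mulmxA hEu.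
have UE : U *m E = U by rewrite -mulmxA hu.
have UU : U *m U = U by rewrite mulmxA -(mulmxA u^T) uu mulmx1.
set E' := E - U.
have hs' : E'^T = E' by rewrite /E' linearB /= hs /U trmx_mul trmxK.
have hi' : E' *m E' = E'.
  by rewrite /E' mulmxBl !mulmxBr hi EU UE UU subrr subr0.
have E'E : E' *m E = E' by rewrite /E' mulmxBl hi UE.
have htr' : \tr E' < N%:R.
  have h1 : \tr U = 1 by rewrite /U mxtrace_mulC uu mxtrace1.
  move: htr; rewrite /E' raddfB /= h1 -natr1 => htr; lra.
have [us' [hus' [hpw' hsum']]] := IH E' hs' hi' htr'.
exists (u :: us'); split; [|split].
- move=> x; rewrite inE => /orP [/eqP -> //|hx].
  have [hx1 hx2] := hus' x hx; split => //.
  by rewrite -hx2 -mulmxA E'E.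
- rewrite pairwise_cons hpw' andbT; apply/allP => x hx.
  have [_ hx2] := hus' x hx.
  have : x *m u^T = 0.
    by rewrite -hx2 /E' -mulmxA mulmxBl hEu /U -mulmxA uu mulmx1 subrr mulmx0.
  by rewrite dotvC /dotv => ->; rewrite mxE.
- by rewrite big_cons hsum' /E' addrC subrK.
Qed.

Lemma onb (R : realType) (d : nat) (E : 'M[R]_d) :
  E^T = E -> E *m E = E ->
  exists us : seq 'rV[R]_d,
    (forall u, u \in us -> sqnorm u = 1 /\ u *m E = u) /\
    pairwise (fun u w => dotv u w == 0) us /\
    \sum_(u <- us) u^T *m u = E.
Proof.
move=> hs hi; have [N hN] : exists N : nat, \tr E < N%:R.
  by exists (Num.truncn (\tr E)).+1; rewrite truncnS_gt.
exact: onb_aux hs hi hN.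
Qed.

Lemma reflM_orth (R : realType) (d : nat) (ws : seq 'rV[R]_d) :
  pairwise (fun u w => dotv u w == 0) ws ->
  reflM ws = 1%:M - 2 *: \sum_(u <- ws) u^T *m u.
Proof.
elim: ws => [|u ws IH]; first by rewrite /reflM /= big_nil scaler0 subr0.
rewrite pairwise_cons => /andP [/allP hall hpw].
rewrite /reflM /= -/(reflM ws) IH // /Ru big_cons.
have h0 : (\sum_(w <- ws) w^T *m w) *m (u^T *m u) = 0.
  rewrite mulmx_suml big1_seq // => w hw.
  have := hall w hw; rewrite dotvC => /eqP /orth_mx h.
  by rewrite mulmxA -(mulmxA w^T) h mulmx0 mul0mx.
rewrite mulmxBr mulmx1 mulmxBl mul1mx -scalemxAr -scalemxAl h0 !scaler0 subr0.
by rewrite scalerDr opprD addrA addrAC.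
Qed.

Lemma half_proj (R : realType) (d : nat) (P : 'M[R]_d) :
  P *m P = 1%:M -> P^T = P ->
  let p := 2^-1 *: (1%:M - P) in
  [/\ p^T = p, p *m p = p & 1%:M - 2 *: p = P].
Proof.
move=> hPP hPT p; split.
- by rewrite /p linearZ /= linearB /= trmx1 hPT.
- rewrite /p -scalemxAl -scalemxAr scalerA mulmxBl !mulmxBr !mul1mx mulmx1 hPP.
  rewrite opprB -mulr2n -scaler_nat scalerA divfK //.
  by rewrite pnatr_eq0.
- rewrite /p scalerA divff ?pnatr_eq0 // scale1r opprB addrC.
  by rewrite subrK.
Qed.

Lemma zmod_sw (V : zmodType) (a b c e : V) : a - b - (c - e) = a - c - (b - e).
Proof. rewrite !opprB !addrA. rewrite (addrAC (a - b)) (addrAC a (- b)) (addrAC (a - c)). by []. Qed.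

Lemma half_comm (R : realType) (d : nat) (P Q : 'M[R]_d) :
  P *m Q = Q *m P ->
  (2^-1 *: (1%:M - P)) *m (2^-1 *: (1%:M - Q)) =
  (2^-1 *: (1%:M - Q)) *m (2^-1 *: (1%:M - P)).
Proof.
move=> h; rewrite -!scalemxAl -!scalemxAr !mulmxBl !mulmxBr !mul1mx !mulmx1 h.
by rewrite zmod_sw.
Qed.

Lemma proj_alg (R : realType) (d : nat) (p q : 'M[R]_d) :
  p *m p = p -> q *m q = q -> p *m q = q *m p -> p^T = p -> q^T = q ->
  let Ea := p *m q in let Eb := p - p *m q in let Eb' := q - p *m q in
  [/\ [/\ Ea^T = Ea, Eb^T = Eb & Eb'^T = Eb'],
      [/\ Ea *m Ea = Ea, Eb *m Eb = Eb & Eb' *m Eb' = Eb'],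
      [/\ Eb *m Ea = 0, Eb *m Eb' = 0, Eb' *m Ea = 0, Ea *m Eb = 0 & Ea *m Eb' = 0] &
      Ea + Eb = p /\ Ea + Eb' = q].
Proof.
move=> hp hq hpq hpT hqT Ea Eb Eb'.
have A4 : p *m (p *m q) = p *m q by rewrite mulmxA hp.
have A5 : p *m q *m p = p *m q by rewrite -mulmxA -hpq mulmxA hp.
have A6 : p *m q *m q = p *m q by rewrite -mulmxA hq.
have A7 : p *m q *m (p *m q) = p *m q by rewrite mulmxA A5 A6.
have A8 : q *m (p *m q) = p *m q by rewrite mulmxA -hpq A6.
have ET : Ea^T = Ea by rewrite /Ea trmx_mul hpT hqT hpq.
split; [split|split|split|split].
- exact: ET.
- by rewrite /Eb linearB /= hpT ET.
- by rewrite /Eb' linearB /= hqT ET.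
- exact: A7.
- by rewrite /Eb mulmxBl !mulmxBr hp A4 A5 A7 subrr subr0.
- by rewrite /Eb' mulmxBl !mulmxBr hq A8 A6 A7 subrr subr0.
- by rewrite /Eb /Ea mulmxBl A4 A7 subrr.
- by rewrite /Eb mulmxBl !mulmxBr A4 A6 A7 !subrr.
- by rewrite /Eb' /Ea mulmxBl A8 A7 subrr.
- by rewrite /Eb /Ea mulmxBr A5 A7 subrr.
- by rewrite /Eb' /Ea mulmxBr A6 A7 subrr.
- by rewrite /Ea /Eb addrC subrK.
- by rewrite /Ea /Eb' addrC subrK.
Qed.

Lemma cross_orth (R : realType) (d : nat) (E1 E2 : 'M[R]_d) (u w : 'rV[R]_d) :
  u *m E1 = u -> w *m E2 = w -> E2^T = E2 -> E1 *m E2 = 0 -> dotv u w = 0.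
Proof.
move=> hu hw hE2 h0.
have : u *m w^T = 0 by rewrite -hu -hw trmx_mul hE2 -mulmxA (mulmxA E1) h0 mul0mx mulmx0.
by rewrite /dotv => ->; rewrite mxE.
Qed.

Lemma tr_onb (R : realType) (d : nat) (us : seq 'rV[R]_d) :
  (forall u, u \in us -> sqnorm u = 1) ->
  \tr (\sum_(u <- us) u^T *m u) = (size us)%:R.
Proof.
elim: us => [|u us IH] h; first by rewrite big_nil linear0.
rewrite big_cons mxtraceD IH; last by move=> w hw; apply: h; rewrite inE hw orbT.
rewrite mxtrace_mulC unit_mx ?mxtrace1 //=; last by apply: h; rewrite inE eqxx.
by rewrite -[(size us).+1]add1n natrD.
Qed.

Lemma core (R : realType) (d : nat) (A : algType R)
  (iota : {linear 'rV[R]_d -> A})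
  (hsq : forall v, iota v * iota v = - (sqnorm v)%:A)
  (alpha : {lrmorphism A -> A}) (halpha : forall v, alpha (iota v) = - iota v)
  (P Q : 'M[R]_d) (us ws : seq 'rV[R]_d) :
  P *m P = 1%:M -> Q *m Q = 1%:M -> P^T = P -> Q^T = Q -> P *m Q = Q *m P ->
  (forall u, u \in us -> sqnorm u = 1) ->
  (forall u, u \in ws -> sqnorm u = 1) ->
  (forall v, alpha (X iota us) * iota v = iota (v *m P) * X iota us) ->
  (forall v, alpha (X iota ws) * iota v = iota (v *m Q) * X iota ws) ->
  exists a b b' : nat,
    [/\ \tr P = d%:R - 2 * (a + b)%:R, \tr Q = d%:R - 2 * (a + b')%:R,
        \tr (P *m Q) = d%:R - 2 * (b + b')%:R &
        X iota us * X iota ws =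
        (-1) ^+ (b * a + b * b' + b' * a) *: (X iota ws * X iota us)].
Proof.
move=> hPP hQQ hPT hQT hPQ hus hws hrc hre.
have [pT pp hP] := half_proj hPP hPT.
have [qT qq hQ] := half_proj hQQ hQT.
set p := 2^-1 *: (1%:M - P) in pT pp hP.
set q := 2^-1 *: (1%:M - Q) in qT qq hQ.
have hpq : p *m q = q *m p by apply: half_comm.
clearbody p q.
have [[EaT EbT Eb'T] [Eaa Ebb Eb'b'] [z1 z2 z3 z4 z5] [sp sq]] :=
  proj_alg pp qq hpq pT qT.
set Ea := p *m q in EaT Eaa z1 z2 z3 z4 z5 sp sq.
set Eb := p - Ea in EbT Ebb z1 z2 z4 sp.
set Eb' := q - Ea in Eb'T Eb'b' z2 z3 z5 sq.
have EaE : Ea = p *m q by [].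
clearbody Ea Eb Eb'.
have [as_ [has [hpa hsa]]] := onb EaT Eaa.
have [bs [hbs [hpb hsb]]] := onb EbT Ebb.
have [bs' [hbs' [hpb' hsb']]] := onb Eb'T Eb'b'.
have ua : forall u, u \in as_ -> sqnorm u = 1 by move=> u /has [].
have ub : forall u, u \in bs -> sqnorm u = 1 by move=> u /hbs [].
have ub' : forall u, u \in bs' -> sqnorm u = 1 by move=> u /hbs' [].
have ta := tr_onb ua; have tb := tr_onb ub; have tb' := tr_onb ub'.
rewrite hsa in ta; rewrite hsb in tb; rewrite hsb' in tb'.
have orth : forall E1 E2 (L1 L2 : seq 'rV[R]_d),
    (forall u, u \in L1 -> u *m E1 = u) -> (forall u, u \in L2 -> u *m E2 = u) ->
    E2^T = E2 -> E1 *m E2 = 0 ->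
    forall u w, u \in L1 -> w \in L2 -> dotv u w = 0.
  by move=> E1 E2 L1 L2 h1 h2 hT h0 u w hu hw; apply: (cross_orth (h1 u hu) (h2 w hw)).
have pa : forall u, u \in as_ -> u *m Ea = u by move=> u /has [].
have pb : forall u, u \in bs -> u *m Eb = u by move=> u /hbs [].
have pb' : forall u, u \in bs' -> u *m Eb' = u by move=> u /hbs' [].
have o1 := orth _ _ _ _ pb pa EaT z1.
have o2 := orth _ _ _ _ pb pb' Eb'T z2.
have o3 := orth _ _ _ _ pb' pa EaT z3.
have o4 := orth _ _ _ _ pa pb EbT z4.
have o5 := orth _ _ _ _ pa pb' Eb'T z5.
have rP : reflM (as_ ++ bs) = P.
  rewrite reflM_orth ?big_cat /= ?hsa ?hsb ?sp //.
  rewrite pairwise_cat hpa hpb andbT andbT; apply/allrelP => u w hu hw.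
  by rewrite (o4 u w hu hw).
have rQ : reflM (as_ ++ bs') = Q.
  rewrite reflM_orth ?big_cat /= ?hsa ?hsb' ?sq //.
  rewrite pairwise_cat hpa hpb' andbT andbT; apply/allrelP => u w hu hw.
  by rewrite (o5 u w hu hw).
have uab : forall u, u \in as_ ++ bs -> sqnorm u = 1.
  by move=> u; rewrite mem_cat => /orP [/ua|/ub].
have uab' : forall u, u \in as_ ++ bs' -> sqnorm u = 1.
  by move=> u; rewrite mem_cat => /orP [/ua|/ub'].
exists (size as_), (size bs), (size bs'); split.
- by rewrite -hP raddfB /= mxtrace1 mxtraceZ -sp mxtraceD ta tb natrD.
- by rewrite -hQ raddfB /= mxtrace1 mxtraceZ -sq mxtraceD ta tb' natrD.
- rewrite -hP -hQ mulmxBl !mulmxBr mul1mx mulmx1 -!scalemxAl -scalemxAr.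
  rewrite !raddfB /= !mxtraceZ mxtrace1 mul1mx -scalemxAr mxtraceZ.
  have trpq : \tr (p *m q) = (size as_)%:R by rewrite -EaE ta.
  rewrite trpq -sp -sq !mxtraceD ta tb tb' !natrD.
  lra.
- exact: (cliff_main hsq halpha hus hws uab uab' hPP hQQ rP rQ hrc hre o1 o2 o3).
Qed.

Lemma adjtrE (n i : nat) (h1 : (i.-1 < n)%N) (h2 : (i < n)%N) :
  adjtr n i = tperm (Ordinal h1) (Ordinal h2).
Proof.
rewrite /adjtr; case: insubP => [a _ ea|]; last by rewrite h1.
case: insubP => [b _ eb|]; last by rewrite h2.
by congr tperm; apply: val_inj.
Qed.

Lemma perm_ext (n : nat) (xs ys : seq 'I_n) :
  uniq xs -> uniq ys -> size xs = size ys -> exists g : 'S_n, map g xs = ys.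
Proof.
elim: xs ys => [|x xs IH] [|y ys] //=; first by exists 1%g.
move=> /andP [hx hxs] /andP [hy hys] [hsz].
have [g hg] := IH ys hxs hys hsz.
exists (g * tperm (g x) y)%g; rewrite permM tpermL; congr (_ :: _).
rewrite -hg; apply/eq_in_map => z hz /=.
rewrite permM tpermD //.
  by rewrite (inj_eq perm_inj); apply: contraNneq hx => ->.
by apply: contraNneq hy => ->; rewrite -hg map_f.
Qed.

Lemma char_conj (R : realType) (n d : nat) (pi : 'S_n -> 'M[R]_d)
  (pi_mul : forall s t : 'S_n, pi (s * t)%g = pi s *m pi t) (s g : 'S_n) :
  character pi (s ^ g)%g = character pi s.
Proof.
rewrite /character conjgE !pi_mul mxtrace_mulC -mulmxA -pi_mul mulgV -pi_mul.
by rewrite mulg1.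
Qed.

Unset Implicit Arguments.

Theorem proposition3p3 (R : realType) (n d : nat) (pi : 'S_n -> 'M[R]_d)
  (hn : (4 <= n)%N)
  (pi_mul : forall s t : 'S_n, pi (s * t)%g = pi s *m pi t)
  (pi_orth : forall s : 'S_n, pi s *m (pi s)^T = 1%:M)
  (A : algType R) (iota : {linear 'rV[R]_d -> A}) (hA : is_clifford iota)
  (alpha : {lrmorphism A -> A}) (halpha : forall v, alpha (iota v) = - iota v)
  (i k : nat) (hi : (1 <= i <= n.-1)%N) (hk : (1 <= k <= n.-1)%N)
  (hik : (i.+1 < k)%N || (k.+1 < i)%N)
  (ci ck : A) (hci : in_pin iota ci) (hck : in_pin iota ck)
  (hri : rho_is iota alpha ci (pi (adjtr n i)))
  (hrk : rho_is iota alpha ck (pi (adjtr n k)))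
  (hci2 : ci * ci = 1) (hck2 : ck * ck = 1) :
  ci * ck = ck * ci <-> exists z : int, h_pi pi = (4 * z)%:~R.
Proof.
have [hsq _] := hA.
have hi1 : (i.-1 < n)%N by lia.
have hi2 : (i < n)%N by lia.
have hk1 : (k.-1 < n)%N by lia.
have hk2 : (k < n)%N by lia.
have h01 : (0 < n)%N by lia.
have h11 : (1 < n)%N by lia.
have h21 : (2 < n)%N by lia.
have h31 : (3 < n)%N by lia.
set si := tperm (Ordinal hi1) (Ordinal hi2).
set sk := tperm (Ordinal hk1) (Ordinal hk2).
have Ei : adjtr n i = si by apply: adjtrE.
have Ek : adjtr n k = sk by apply: adjtrE.
have E1 : adjtr n 1 = tperm (Ordinal h01) (Ordinal h11) by apply: adjtrE.
have E3 : adjtr n 3 = tperm (Ordinal h21) (Ordinal h31) by apply: adjtrE.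
rewrite Ei in hri; rewrite Ek in hrk.
have pi1 : pi 1%g = 1%:M.
  have h := pi_orth 1%g.
  by rewrite -[LHS]mulmx1 -{1}h mulmxA -pi_mul mulg1 h.
have sq1 : forall s : 'S_n, (s * s = 1)%g -> pi s *m pi s = 1%:M.
  by move=> s hs; rewrite -pi_mul hs pi1.
have symm : forall s : 'S_n, (s * s = 1)%g -> (pi s)^T = pi s.
  move=> s hs; rewrite -[(pi s)^T]mul1mx -(sq1 s hs) -mulmxA pi_orth mulmx1 //.
have ne : forall (x y : 'I_n), (val x != val y) -> x != y.
  by move=> x y; apply: contra => /eqP ->.
have hcomm : (si * sk = sk * si)%g.
  rewrite conjgC /si /sk tpermJ !tpermD //; apply: ne => /=; lia.
have [g1 hg1] : exists g : 'S_n, map g [:: Ordinal hi1; Ordinal hi2] =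
    [:: Ordinal hk1; Ordinal hk2].
  apply: perm_ext => //=; rewrite !inE andbT; apply: ne => /=; lia.
have hchik : character pi si = character pi sk.
  case: hg1 => e1 e2.
  by rewrite -(char_conj pi_mul si g1) /si tpermJ e1 e2.
have [g2 hg2] : exists g : 'S_n,
    map g [:: Ordinal h01; Ordinal h11; Ordinal h21; Ordinal h31] =
    [:: Ordinal hi1; Ordinal hi2; Ordinal hk1; Ordinal hk2].
  apply: perm_ext => //; rewrite -(map_inj_uniq val_inj) /= !inE; lia.
have hch13 : character pi (adjtr n 1 * adjtr n 3)%g = \tr (pi si *m pi sk).
  case: hg2 => e1 e2 e3 e4.
  rewrite E1 E3 -(char_conj pi_mul _ g2) conjMg !tpermJ e1 e2 e3 e4.
  by rewrite /character pi_mul.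
have [us [hus eci]] := hci; have [ws [hws eck]] := hck.
subst ci ck.
have [a [b [b' [trP trQ trPQ hsign]]]] :=
  core hsq halpha (sq1 _ (tperm2 _ _)) (sq1 _ (tperm2 _ _))
    (symm _ (tperm2 _ _)) (symm _ (tperm2 _ _))
    (etrans (esym (pi_mul _ _)) (etrans (congr1 pi hcomm) (pi_mul _ _)))
    hus hws hri hrk.
have hbb : b' = b.
  move: hchik; rewrite /character trP trQ => h.
  have : (b'%:R : R) = b%:R.
    by move: h; rewrite !natrD => h; lra.
  by move/eqP; rewrite eqr_nat => /eqP.
subst b'.
have hh : h_pi pi = (b + b)%:R.
  rewrite /h_pi hch13 trPQ /character pi1 mxtrace1.
  by rewrite opprB addrC subrK mulrC mulrA mulVf ?mul1r // pnatr_eq0.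
have hsg : (-1) ^+ (b * a + b * b + b * a) = (-1) ^+ b :> R.
  rewrite -signr_odd -[in RHS]signr_odd !oddD !oddM.
  by case: (odd a); case: (odd b).
rewrite -/(X iota us) -/(X iota ws) in hci2 hck2 *.
rewrite hsign hsg hh; split.
- move=> hc.
  have hb : odd b = false.
    apply/negbTE/negP => hodd.
    move: hc; rewrite -signr_odd hodd expr1 scaleN1r => hc.
    have h0 := self_opp0 (esym hc).
    have : (1 : A) = 0.
      have e : X iota ws * X iota ws = X iota ws * X iota us * (X iota us * X iota ws).
        by rewrite -mulrA (mulrA (X iota us)) hci2 mul1r.
      by rewrite -hck2 e h0 mul0r.
    by move/eqP; rewrite oner_eq0.
  exists (b./2)%:Z; rewrite -PoszM; congr (_%:R).
  have := odd_double_half b; rewrite hb add0n => {1 2}<-.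
  by rewrite -doubleD -!mul2n; lia.
- move=> [z hz].
  have hb : odd b = false.
    apply/negbTE/negP => hodd.
    have := odd_double_half b; rewrite hodd => hb.
    have : ((b + b)%:Z) = 4 * z.
      by apply: (@intr_inj R); rewrite -hz.
    lia.
  by rewrite -signr_odd hb expr0 scale1r.
Qed.
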